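(* Let $m,n$ be even positive integers and let $\mathcal{X}_0,\mathcal{X}_1\subseteq\{0,1\}^{2mn}$ be as defined in the context. Let $p$ be a real multilinear polynomial in $2mn$ variables such that $p(x)\neq 0$ for all $x\in\mathcal{X}_1$ and $p(x)=0$ for all $x\in\mathcal{X}_0$. Then $\deg(p)\geq \min(n/2,m/2)+1$.
   Context: For $z\in\{0,1\}^k$ let $w(z)$ denote its Hamming weight. Let $\mathcal{A}_1=\{0^m y : y\in\{0,1\}^m,\ m/2\le w(y)\le m\}$ and $\mathcal{A}_0=\{y0^m : y\in\{0,1\}^m,\ m/2\le w(y)\le m\}$ (subsets of $\{0,1\}^{2m}$). A string $x\in\{0,1\}^{2mn}$ is viewed as $n$ consecutive blocks of $2m$ bits, each block being $x^{(0,i)}x^{(1,i)}$ with $x^{(0,i)},x^{(1,i)}\in\{0,1\}^m$, $i=1,\dots,n$. Define $\mathcal{X}_1=\mathcal{A}_0\times\cdots\times\mathcal{A}_0$ ($n$ factors) and $\mathcal{X}_0=\bigcup\{\mathcal{A}_{y_1}\times\cdots\times\mathcal{A}_{y_n} : y\in\{0,1\}^n,\ w(y)=n/2\}$. A multilinear polynomial is $p(x)=\sum_{S\subseteq[N]}a_S\prod_{i\in S}x_i$ with real $a_S$; its degree is $\max\{|S|: a_S\neq 0\}$. *)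

(* Defs.v *)
From HB Require Import structures.
From mathcomp Require Import all_boot all_order all_algebra.
From mathcomp Require Import reals.
Set Implicit Arguments. Unset Strict Implicit. Unset Printing Implicit Defensive.
Import Order.TTheory GRing.Theory Num.Theory.
Local Open Scope ring_scope.

(* A real multilinear polynomial in N variables x_0..x_{N-1}: its coefficient
   family a_S, S ranging over subsets of 'I_N. *)
Definition mlpoly (R : realType) (N : nat) := {ffun {set 'I_N} -> R}.

Definition mleval (R : realType) (N : nat) (p : mlpoly R N) (x : 'I_N -> bool) : R :=
  \sum_(S : {set 'I_N}) p S * \prod_(i in S) (if x i then 1 else 0).

(* degree = max |S| with a_S <> 0 (0 for the zero polynomial) *)
Definition mldeg (R : realType) (N : nat) (p : mlpoly R N) : nat :=
  \max_(S : {set 'I_N} | p S != 0%R) #|S|%N.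

Definition bitn (N : nat) (x : 'I_N -> bool) (k : nat) : bool :=
  [exists i : 'I_N, (val i == k) && x i].

(* Blocks i = 0..n-1 (paper's i = 1..n) of 2m bits: block i is
   x^(0,i) x^(1,i); x^(0,i)_j = bit 2mi+j, x^(1,i)_j = bit 2mi+m+j (j<m). *)
Definition w0 (m N : nat) (x : 'I_N -> bool) (i : nat) : nat :=
  (\sum_(j < m) bitn x (2 * m * i + j))%N.
Definition w1 (m N : nat) (x : 'I_N -> bool) (i : nat) : nat :=
  (\sum_(j < m) bitn x (2 * m * i + m + j))%N.

(* block i of x lies in A_b :
   A_1 = {0^m y : m/2 <= w(y) <= m},  A_0 = {y 0^m : m/2 <= w(y) <= m}. *)
Definition inA (m N : nat) (b : bool) (x : 'I_N -> bool) (i : nat) : bool :=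
  if b then ((w0 m x i == 0) && (m <= 2 * w1 m x i) && (w1 m x i <= m))%N
  else ((w1 m x i == 0) && (m <= 2 * w0 m x i) && (w0 m x i <= m))%N.

Definition inX1 (m n : nat) (x : 'I_(2 * m * n) -> bool) : Prop :=
  forall i : 'I_n, inA m false x i.

Definition inX0 (m n : nat) (x : 'I_(2 * m * n) -> bool) : Prop :=
  exists y : 'I_n -> bool,
    (2 * #|[set i : 'I_n | y i]|)%N = n /\ forall i : 'I_n, inA m (y i) x i.
Arguments inX1 : clear implicits.
Arguments inX0 : clear implicits.

(* Main.v *)
Require Import Defs.
From mathcomp Require Import all_boot all_order all_algebra.
From mathcomp Require Import reals.
From mathcomp Require Import zify ring lra.
Set Implicit Arguments. Unset Strict Implicit. Unset Printing Implicit Defensive.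
Import Order.TTheory GRing.Theory Num.Theory.

Section Helpers.
Variable R : realType.

Definition flip (N D : nat) (x : 'I_N -> bool) (c : 'I_D -> nat) (v : bool)
  (T : {set 'I_D}) : 'I_N -> bool :=
  fun i => if [exists t in T, c t == val i] then v else x i.

Lemma mleval_ext N (p : mlpoly R N) (x x' : 'I_N -> bool) :
  (forall i, x i = x' i) -> mleval p x = mleval p x'.
Proof.
move=> H; apply: eq_bigr => S _; congr (_ * _)%R; apply: eq_bigr => i _.
by rewrite H.
Qed.

Lemma cube N D (p : mlpoly R N) (x : 'I_N -> bool) (c : 'I_D -> nat) (v : bool) :
  injective c -> (mldeg p < D)%N ->
  (\sum_(T : {set 'I_D}) (-1) ^+ #|T| * mleval p (flip x c v T) = 0)%R.
Proof.
move=> cinj Hdeg.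
rewrite /mleval.
under eq_bigr => T _ do rewrite big_distrr /=.
rewrite exchange_big /=.
apply: big1 => S _.
have [->|pS] := eqVneq (p S) 0%R.
  by apply: big1 => T _; rewrite mul0r mulr0.
have HS : (#|S| < D)%N.
  apply: leq_ltn_trans Hdeg; rewrite /mldeg.
  by apply: (leq_bigmax_cond (F := fun S : {set 'I_N} => #|S|)).
pose B := [set t : 'I_D | [exists i in S, c t == val i]].
pose F := fun i : 'I_N => [pick t : 'I_D | c t == val i].
have HB : (#|B| < D)%N.
  have -> : #|B| = #|[set Some t | t in B]| by rewrite card_imset //; exact: Some_inj.
  apply: leq_ltn_trans HS.
  apply: leq_trans (leq_imset_card F S).
  apply: subset_leq_card; apply/subsetP => o /imsetP [t].
  rewrite inE => /existsP [i /andP [iS /eqP ci]] ->.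
  apply/imsetP; exists i => //; rewrite /F.
  case: pickP => [t' /eqP ct'|]; last by move=> /(_ t); rewrite ci eqxx.
  by congr Some; apply: cinj; rewrite ct' ci.
have [t tB] : exists t, t \notin B.
  apply/existsP; rewrite -(negbK [exists _, _]) negb_exists; apply/negP => /forallP Hall.
  have : B = setT by apply/setP => t; move: (Hall t); rewrite negbK !inE => ->.
  by move=> BT; move: HB; rewrite BT cardsT card_ord ltnn.
pose tog := fun T : {set 'I_D} => if t \in T then T :\ t else t |: T.
have togK : involutive tog.
  move=> T; rewrite /tog; case: (boolP (t \in T)) => tT.
    by rewrite !inE eqxx /= setD1K.
  by rewrite !inE eqxx /= setU1K.
pose G := fun T : {set 'I_D} =>
  ((-1) ^+ #|T| * (p S * \prod_(i in S) (if flip x c v T i then 1 else 0)))%R.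
have HG : forall T, G (tog T) = (- G T)%R.
  move=> T; rewrite /G.
  have -> : (\prod_(i in S) (if flip x c v (tog T) i then 1 else 0) =
            \prod_(i in S) (if flip x c v T i then 1 else 0) :> R)%R.
    apply: eq_bigr => i iS; rewrite /flip.
    have -> : [exists t0 in tog T, c t0 == val i] = [exists t0 in T, c t0 == val i].
      have cti : c t != val i.
        apply/negP => /eqP cti; move: tB; rewrite inE; apply/negP; rewrite negbK.
        by apply/existsP; exists i; rewrite iS cti eqxx.
      apply/existsP/existsP => [[t0 /andP [t0T ct0]]|[t0 /andP [t0T ct0]]];
        exists t0; rewrite ct0 andbT.
      - have t0t : t0 != t by apply: contraNneq cti => <-.
        by move: t0T; rewrite /tog; case: ifP => _; rewrite !inE (negbTE t0t) //.
      - have t0t : t0 != t by apply: contraNneq cti => <-.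
        by rewrite /tog; case: ifP => _; rewrite !inE (negbTE t0t) ?t0T.
    by [].
  rewrite /tog; case: ifP => tT.
    by rewrite (cardsD1 t T) tT add1n exprS mulN1r mulNr ?opprK.
  by rewrite cardsU1 tT add1n exprS mulN1r mulNr ?opprK.
have : (\sum_(T : {set 'I_D}) G T = \sum_(T : {set 'I_D}) G (tog T))%R.
  by rewrite (reindex_inj (can_inj togK)).
move=> HH.
have HH' : (\sum_(T : {set 'I_D}) G (tog T) = - \sum_(T : {set 'I_D}) G T)%R.
  by rewrite -sumrN; apply: eq_bigr => T _; exact: HG.
have : (\sum_(T : {set 'I_D}) G T = 0)%R by lra.
by move=> H0; rewrite -[RHS]H0.
Qed.

Lemma cube_zero N D (p : mlpoly R N) (x : 'I_N -> bool) (c : 'I_D -> nat) (v : bool) :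
  injective c -> (mldeg p < D)%N ->
  (forall T : {set 'I_D}, T != set0 -> mleval p (flip x c v T) = 0%R) ->
  mleval p x = 0%R.
Proof.
move=> cinj Hd HT; have := cube x v cinj Hd.
rewrite (bigD1 set0) //= big1 ?addr0; last first.
  by move=> T HT0; rewrite HT ?mulr0.
rewrite cards0 expr0 mul1r => <-; apply: mleval_ext => i.
by rewrite /flip; case: existsP => // [[t]]; rewrite inE.
Qed.
End Helpers.

Lemma bitn_ord N (x : 'I_N -> bool) (i : 'I_N) : bitn x (val i) = x i.
Proof.
apply/existsP/idP => [[j /andP [/eqP /val_inj -> ->]] //|xi].
by exists i; rewrite eqxx xi.
Qed.

Lemma bitn_lt N (x : 'I_N -> bool) k (H : (k < N)%N) : bitn x k = x (Ordinal H).
Proof. by rewrite -bitn_ord. Qed.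

Lemma bitn_ge N (x : 'I_N -> bool) k : (N <= k)%N -> bitn x k = false.
Proof.
move=> H; apply/existsP => [[j /andP [/eqP jk _]]].
by move: (ltn_ord j); rewrite jk ltnNge H.
Qed.

Lemma bitn_flip N D (x : 'I_N -> bool) (c : 'I_D -> nat) v T k :
  bitn (flip x c v T) k =
  if (k < N)%N && [exists t in T, c t == k] then v else bitn x k.
Proof.
case: (ltnP k N) => H /=; last by rewrite !bitn_ge.
by rewrite !(bitn_lt _ H) /flip.
Qed.

Definition W (m N : nat) (x : 'I_N -> bool) (hb : nat) : nat :=
  (\sum_(j < m) bitn x (hb * m + j))%N.

Lemma w0E m N (x : 'I_N -> bool) i : w0 m x i = W m x (2 * i).
Proof. by apply: eq_bigr => j _; congr bitn; lia. Qed.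

Lemma w1E m N (x : 'I_N -> bool) i : w1 m x i = W m x (2 * i + 1).
Proof. by apply: eq_bigr => j _; congr bitn; lia. Qed.

Lemma W_le m N (x : 'I_N -> bool) hb : (W m x hb <= m)%N.
Proof.
rewrite /W; apply: leq_trans (_ : \sum_(j < m) 1 <= m)%N.
  by apply: leq_sum => j _; case: bitn.
by rewrite sum_nat_const card_ord muln1.
Qed.

Lemma W_mono m N (x x' : 'I_N -> bool) hb :
  (forall k, bitn x k -> bitn x' k) -> (W m x hb <= W m x' hb)%N.
Proof.
move=> H; apply: leq_sum => j _.
by case: (boolP (bitn x _)) => [/H ->|].
Qed.

Lemma W_strict m N (x x' : 'I_N -> bool) hb (j : 'I_m) :
  (forall k, bitn x k -> bitn x' k) ->
  ~~ bitn x (hb * m + j) -> bitn x' (hb * m + j) ->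
  (W m x hb < W m x' hb)%N.
Proof.
move=> H b1 b2; rewrite /W (bigD1 j) //= [X in (_ < X)%N](bigD1 j) //= (negbTE b1) b2.
rewrite add0n add1n ltnS; apply: leq_sum => i _.
by case: (boolP (bitn x _)) => [/H ->|].
Qed.

Lemma W_eq m N (x x' : 'I_N -> bool) hb :
  (forall j, (j < m)%N -> bitn x (hb * m + j) = bitn x' (hb * m + j)) ->
  W m x hb = W m x' hb.
Proof. by move=> H; apply: eq_bigr => j _; rewrite H. Qed.

Lemma W_pos m N (x : 'I_N -> bool) hb :
  W m x hb != 0%N -> exists j : 'I_m, bitn x (hb * m + j).
Proof.
move=> H; apply/existsP; apply: contraNT H => /existsPn Hn.
by apply/eqP; apply: big1 => j _; rewrite (negbTE (Hn j)).
Qed.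

Lemma W_card m N (x : 'I_N -> bool) hb :
  (W m x hb + #|[set j : 'I_m | ~~ bitn x (hb * m + j)]|)%N = m.
Proof.
rewrite -sum1_card /W [X in (_ + X)%N]big_mkcond /= -big_split /=.
rewrite -[RHS]card_ord -sum1_card; apply: eq_bigr => j _.
by rewrite inE; case: bitn.
Qed.

Lemma idx_uniq m a b j j' : (j < m)%N -> (j' < m)%N ->
  (a * m + j = b * m + j')%N -> a = b /\ j = j'.
Proof.
move=> Hj Hj' E.
have mpos : (0 < m)%N by apply: leq_ltn_trans Hj.
have Ha : ((a * m + j) %/ m = a)%N by rewrite divnMDl // divn_small // addn0.
have Hb : ((b * m + j') %/ m = b)%N by rewrite divnMDl // divn_small // addn0.
have ab : a = b by rewrite -Ha -Hb E.
by split => //; move: E; rewrite ab => /addnI.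
Qed.

Lemma idx_lt m n hb j : (hb < 2 * n)%N -> (j < m)%N -> (hb * m + j < 2 * m * n)%N.
Proof. move=> H1 H2; nia. Qed.

Lemma inj_into (T : finType) (A : {set T}) D : (D <= #|A|)%N ->
  exists f : 'I_D -> T, injective f /\ forall t, f t \in A.
Proof.
move=> H; exists (fun t => enum_val (widen_ord H t)); split.
  by move=> t t' /enum_val_inj /(congr1 val) /= /val_inj.
by move=> t; exact: enum_valP.
Qed.


Theorem lemma2 (R : realType) (m n : nat)
  (hm : (0 < m)%N) (hme : ~~ odd m) (hn : (0 < n)%N) (hne : ~~ odd n)
  (p : mlpoly R (2 * m * n))
  (h1 : forall x, inX1 m n x -> mleval p x <> 0%R)
  (h0 : forall x, inX0 m n x -> mleval p x = 0%R) :
  ((minn n./2 m./2).+1 <= mldeg p)%N.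
Proof.
rewrite leqNgt; apply/negP => Hdeg.
have dh : (minn n./2 m./2 <= m./2)%N := geq_minr _ _.
have dk : (minn n./2 m./2 <= n./2)%N := geq_minl _ _.
move: Hdeg dh dk; set d := minn n./2 m./2; set h := m./2; set k := n./2.
move=> Hdeg dh dk.
have hm2 : m = (2 * h)%N.
  by rewrite /h -[m in LHS]odd_double_half (negbTE hme) add0n -mul2n.
have hn2 : n = (2 * k)%N.
  by rewrite /k -[n in LHS]odd_double_half (negbTE hne) add0n -mul2n.
have claim1 : forall K (x : 'I_(2 * m * n) -> bool) (y : 'I_n -> bool),
    (2 * #|[set i | y i]|)%N = n ->
    (forall i : 'I_n, W m x (2 * i + ~~ y i) = 0%N) ->
    (\sum_(i < n) (h - W m x (2 * i + y i)) < K)%N -> mleval p x = 0%R.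
  elim=> [//|K IH] x y Hy Hz Hs.
  case: (boolP [forall i : 'I_n, h <= W m x (2 * i + y i)]) => [/forallP Hall|].
    apply: h0; exists y; split => // i.
    rewrite /inA w0E w1E; move: (Hz i) (Hall i) (W_le m x (2 * i + y i)).
    case: (y i) => /=; rewrite ?addn0 => -> H1 H2; rewrite eqxx /=; apply/andP; split; lia.
  move/forallPn => [i0]; rewrite -ltnNge => Hi0.
  have [hb0 Ehb0] : exists hb0, hb0 = (2 * i0 + y i0)%N by eexists.
  rewrite -Ehb0 in Hi0.
  have Hlt : (hb0 < 2 * n)%N by rewrite Ehb0; case: (y i0); have := ltn_ord i0; simpl; lia.
  have Hne1 : forall i : 'I_n, (2 * i + ~~ y i)%N != hb0.
    move=> i; rewrite Ehb0; apply/eqP; have [->|ne] := eqVneq i i0.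
      by case: (y i0) => /=; lia.
    have ne' : (i : nat) <> i0 by move=> E; move/eqP: ne; apply; apply: val_inj.
    by case: (y i) (y i0) => [] [] /=; lia.
  have Hne2 : forall i : 'I_n, i != i0 -> (2 * i + y i)%N != hb0.
    move=> i ne; rewrite Ehb0; apply/eqP.
    have ne' : (i : nat) <> i0 by move=> E; move/eqP: ne; apply; apply: val_inj.
    by case: (y i) (y i0) => [] [] /=; lia.
  pose Zs := [set j : 'I_m | ~~ bitn x (hb0 * m + j)].
  have HZ : (d.+1 <= #|Zs|)%N by have := W_card m x hb0; rewrite -/Zs; lia.
  have [f [finj fZ]] := inj_into HZ.
  pose c := fun t : 'I_d.+1 => (hb0 * m + f t)%N.
  have cinj : injective c by move=> t t' /addnI /val_inj /finj.
  apply: (cube_zero (c:=c) (v:=true) cinj) => // T /set0Pn [t0 t0T].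
  pose x' := flip x c true T.
  have mono : forall kk, bitn x kk -> bitn x' kk.
    by move=> kk; rewrite /x' bitn_flip; case: ifP.
  have off : forall hb, hb != hb0 -> W m x' hb = W m x hb.
    move=> hb ne; apply: W_eq => j Hj; rewrite /x' bitn_flip.
    case: ifP => // /andP [_ /existsP [t /andP [_ /eqP E]]].
    have [E1 _] := idx_uniq (ltn_ord (f t)) Hj E.
    by move: ne; rewrite -E1 eqxx.
  have str : (W m x hb0 < W m x' hb0)%N.
    apply: (W_strict (j := f t0)) => //.
      by move: (fZ t0); rewrite inE.
    rewrite /x' bitn_flip idx_lt //=.
    by rewrite (_ : [exists t in T, c t == (hb0 * m + f t0)%N]) //; apply/existsP; exists t0; rewrite t0T eqxx.
  apply: (IH x' y) => //.
    by move=> i; rewrite off ?Hne1 ?Hz.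
  have Hlt2 : (\sum_(i < n) (h - W m x' (2 * i + y i)) < \sum_(i < n) (h - W m x (2 * i + y i)))%N.
    rewrite (bigD1 i0) //= [X in (_ < X)%N](bigD1 i0) //= -Ehb0.
    rewrite (eq_bigr (fun i : 'I_n => h - W m x (2 * i + y i))%N); last first.
      by move=> i /Hne2 ne; rewrite off.
    rewrite ltn_add2r; lia.
  lia.
have claim2 : forall K (x : 'I_(2 * m * n) -> bool),
    (forall i : 'I_n, W m x (2 * i + 1) = 0%N) ->
    (\sum_(i < n) W m x (2 * i) < K)%N -> mleval p x = 0%R.
  elim=> [//|K IH] x Hz Hs.
  pose Zb := [set i : 'I_n | W m x (2 * i) == 0%N].
  case: (leqP k #|Zb|) => Hk.
    have [g [ginj gZ]] := inj_into Hk.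
    pose Y := [set g t | t : 'I_k].
    apply: (claim1 (\sum_(i < n) (h - W m x (2 * i + (i \in Y)))).+1 x (fun i => i \in Y)) => //.
      have -> : [set i | i \in Y] = Y by apply/setP => i; rewrite inE.
      by rewrite card_imset // card_ord; lia.
    move=> i; case: (boolP (i \in Y)) => /= [/imsetP [t _ ->]|_].
      by have := gZ t; rewrite inE addn0 => /eqP.
    exact: Hz.
  have HNZ : (d.+1 <= #|~: Zb|)%N by have := cardsC Zb; rewrite card_ord; lia.
  have [g [ginj gNZ]] := inj_into HNZ.
  have : forall t, exists j : 'I_m, bitn x (2 * g t * m + j).
    by move=> t; apply: W_pos; move: (gNZ t); rewrite !inE.
  case/fin_all_exists => jt Hjt.
  pose c := fun t => (2 * g t * m + jt t)%N.
  have cinj : injective c.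
    move=> t t' E; have [E1 _] := idx_uniq (ltn_ord _) (ltn_ord _) E.
    by apply: ginj; apply: val_inj; move: E1 => /=; lia.
  apply: (cube_zero (c:=c) (v:=false) cinj) => // T /set0Pn [t0 t0T].
  pose x' := flip x c false T.
  have mono : forall kk, bitn x' kk -> bitn x kk.
    by move=> kk; rewrite /x' bitn_flip; case: ifP.
  apply: (IH x').
    by move=> i; apply/eqP; rewrite -leqn0; apply: leq_trans (W_mono m _ mono) _; rewrite Hz.
  have Hlt2 : (\sum_(i < n) W m x' (2 * i) < \sum_(i < n) W m x (2 * i))%N.
    rewrite (bigD1 (g t0)) // [X in (_ < X)%N](bigD1 (g t0)) //=.
    apply: (@leq_ltn_trans (W m x' (2 * g t0) + \sum_(i < n | i != g t0) W m x (2 * i))).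
      by rewrite leq_add2l; apply: leq_sum => i _; exact: W_mono.
    rewrite ltn_add2r; apply: (W_strict (j := jt t0)) => //.
    have Hl : (2 * g t0 < 2 * n)%N by have := ltn_ord (g t0); lia.
    rewrite /x' bitn_flip idx_lt //=.
    by rewrite (_ : [exists t in T, c t == (2 * g t0 * m + jt t0)%N]) //; apply/existsP; exists t0; rewrite t0T eqxx.
  lia.
pose xs := fun i : 'I_(2 * m * n) => ~~ odd (val i %/ m).
have Wxs : forall hb, (hb < 2 * n)%N -> W m xs hb = (if odd hb then 0 else m)%N.
  move=> hb Hhb; rewrite /W (eq_bigr (fun _ => (~~ odd hb : nat))); last first.
    by move=> j _; rewrite (bitn_lt _ (idx_lt Hhb (ltn_ord j))) /xs /= divnMDl // divn_small // addn0.
  case: (odd hb) => /=; first by rewrite big1.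
  by rewrite sum_nat_const card_ord muln1.
have Hz : forall i : 'I_n, W m xs (2 * i + 1) = 0%N.
  move=> i; rewrite Wxs; last by have := ltn_ord i; lia.
  by rewrite oddD oddM.
have := claim2 _ xs Hz (ltnSn _); apply: h1.
move=> i; rewrite /inA w0E w1E Hz Wxs; last by have := ltn_ord i; lia.
rewrite oddM /=; apply/andP; split; lia.
Qed.
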